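(* Let $v,w\colon\mathbb{R}^2\to\mathbb{R}$ and $u\colon\mathbb{R}\to\mathbb{R}$ be $C^\infty$ functions satisfying: (1) there exists $\delta>0$ such that $v$, $w$ and all their first partial derivatives are bounded on the set $\{(x,y)\colon x\in\mathbb{R},\ y\in(1-\delta,1+\delta)\cup(-1-\delta,-1+\delta)\}$; (2) there exists $a>0$ such that $w(x,1)>a$ and $w(x,-1)<-a$ for all $x\in\mathbb{R}$; (3) $u$ is $T$-periodic for some $T>0$ and $\frac1T\int_0^T u(t)\,dt=0$. For $\lambda\in\mathbb{R}$ consider the system $$\dot x=v(x,y),\qquad \dot y=w(x,y)+u(\lambda t).$$ Suppose that for every $\lambda$ all solutions of this system starting in the region $\{|y|\leqslant 1\}$ can be continued to all $t\geqslant 0$. Then there exists $\lambda_0>0$ such that for every $\lambda\geqslant\lambda_0$ the system has a solution $(x(t),y(t))$ with $|y(t)|<1$ for all $t\geqslant 0$.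
   Context: All functions are $C^\infty$ smooth. *)

(* Defs.v *)
From Stdlib Require Import Reals Lra List.
Open Scope R_scope.

Definition smooth1 (u : R -> R) : Prop :=
  exists D : nat -> R -> R,
    D O = u /\ forall n t, derivable_pt_lim (D n) t (D (S n) t).

Definition continuous2 (f : R -> R -> R) : Prop :=
  forall x y eps, 0 < eps -> exists d, 0 < d /\
    forall x' y', Rabs (x' - x) < d -> Rabs (y' - y) < d ->
      Rabs (f x' y' - f x y) < eps.

(* D l is the mixed partial along the word l
   (true = d/dx, false = d/dy), the head being the last derivative taken. *)
Definition smooth2 (v : R -> R -> R) : Prop :=
  exists D : list bool -> R -> R -> R,
    D nil = v /\
    (forall l x y,
        derivable_pt_lim (fun s => D l s y) x (D (true :: l) x y) /\
        derivable_pt_lim (fun s => D l x s) y (D (false :: l) x y)) /\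
    (forall l, continuous2 (D l)).

Definition deriv_nonneg (f : R -> R) (t l : R) : Prop :=
  forall eps, 0 < eps -> exists d, 0 < d /\
    forall h, h <> 0 -> Rabs h < d -> 0 <= t + h ->
      Rabs ((f (t + h) - f t) / h - l) < eps.

Definition is_solution (v w : R -> R -> R) (u : R -> R) (lam : R)
  (x y : R -> R) : Prop :=
  forall t, 0 <= t ->
    deriv_nonneg x t (v (x t) (y t)) /\
    deriv_nonneg y t (w (x t) (y t) + u (lam * t)).

Definition near_pm1 (delta y : R) : Prop :=
  (1 - delta < y < 1 + delta) \/ (-1 - delta < y < -1 + delta).

(* Main.v *)
Require Import Defs.
From Stdlib Require Import Reals Lra List ClassicalEpsilon Classical.
Open Scope R_scope.


Lemma cont_ind (a b : R) (P : R -> Prop) :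
  a <= b -> P a ->
  (forall s, a <= s < b -> (forall r, a <= r <= s -> P r) ->
     exists h, 0 < h /\ forall r, s <= r <= s + h -> P r) ->
  (forall s, a < s <= b -> (forall r, a <= r < s -> P r) -> P s) ->
  forall r, a <= r <= b -> P r.
Proof.
  intros Hab Pa Hr Hl.
  set (E := fun s => a <= s <= b /\ forall r, a <= r <= s -> P r).
  assert (bE : bound E) by (exists b; intros s [[_ H] _]; exact H).
  assert (eE : exists x, E x).
  { exists a; split; [lra|]. intros r Hr'. replace r with a by lra. exact Pa. }
  destruct (completeness E bE eE) as [m [Hub Hlub]].
  assert (am : a <= m) by (apply Hub; destruct eE as [x Hx]; split; [lra|];
    intros r Hr'; replace r with a by lra; exact Pa).
  assert (mb : m <= b) by (apply Hlub; intros s [[_ H] _]; exact H).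
  assert (below : forall r, a <= r < m -> P r).
  { intros r Hr'. destruct (Rle_or_lt m r) as [Hc|Hc]; [lra|].
    assert (~ is_upper_bound E r) as Hn.
    { intro Hu. specialize (Hlub r Hu). lra. }
    apply Classical_Prop.NNPP. intro HP. apply Hn. intros s [Hs1 Hs2].
    destruct (Rle_or_lt s r) as [|Hsr]; [assumption|].
    exfalso; apply HP; apply Hs2; lra. }
  assert (Pm : forall r, a <= r <= m -> P r).
  { intros r Hr'. destruct (Req_dec r m) as [->|Hne].
    - destruct (Req_dec m a) as [->|Hne2]; [exact Pa|].
      apply Hl; [lra|]. exact below.
    - apply below; lra. }
  assert (m = b).
  { destruct (Req_dec m b) as [|Hne]; [assumption|].
    destruct (Hr m ltac:(lra) Pm) as [h [hp Hh]].
    assert (E (Rmin (m + h) b)).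
    { split. split; [unfold Rmin; destruct Rle_dec; lra| apply Rmin_r].
      intros r Hr'. destruct (Rle_or_lt r m). apply Pm; lra.
      apply Hh; split; [lra|]. pose proof (Rmin_l (m+h) b); lra. }
    specialize (Hub _ H). unfold Rmin in Hub; destruct Rle_dec; lra. }
  subst m. intros r Hr'. apply Pm; lra.
Qed.

Lemma dn_cont f t l : deriv_nonneg f t l ->
  forall eps, 0 < eps -> exists d, 0 < d /\
    forall h, Rabs h < d -> 0 <= t + h -> Rabs (f (t + h) - f t) < eps.
Proof.
  intros H eps He.
  destruct (H 1 ltac:(lra)) as [d0 [d0p Hd0]].
  exists (Rmin d0 (eps / (Rabs l + 1))). split.
  { apply Rmin_pos; [lra|]. apply Rdiv_lt_0_compat; [lra|]. pose proof (Rabs_pos l); lra. }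
  intros h Hh Ht.
  destruct (Req_dec h 0) as [->|hn].
  { rewrite Rplus_0_r, Rminus_eq_0, Rabs_R0. exact He. }
  assert (Hh0 : Rabs h < d0) by (pose proof (Rmin_l d0 (eps / (Rabs l + 1))); lra).
  assert (Hh1 : Rabs h < eps / (Rabs l + 1)) by (pose proof (Rmin_r d0 (eps / (Rabs l + 1))); lra).
  specialize (Hd0 h hn Hh0 Ht).
  set (q := (f (t + h) - f t) / h) in *.
  assert (E : f (t + h) - f t = q * h) by (unfold q; field; exact hn).
  rewrite E, Rabs_mult.
  assert (Rabs q < Rabs l + 1).
  { pose proof (Rabs_triang_inv q l). lra. }
  assert (Rabs h * (Rabs l + 1) < eps).
  { pose proof (Rabs_pos l). apply (Rmult_lt_compat_r (Rabs l + 1)) in Hh1; [|lra].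
    unfold Rdiv in Hh1. rewrite Rmult_assoc, Rinv_l in Hh1; lra. }
  pose proof (Rabs_pos h). pose proof (Rabs_pos q). nra.
Qed.


Lemma persist (z l : R -> R) c :
  (forall s, 0 <= s -> deriv_nonneg z s (l s)) ->
  (forall s, 0 <= s -> z s = c -> 0 < l s) ->
  forall t1, 0 <= t1 -> c <= z t1 -> forall t, t1 <= t -> c <= z t.
Proof.
  intros Hd Hl t1 Ht1 Hc t Ht.
  apply (cont_ind t1 t (fun r => c <= z r)); try lra.
  - intros s Hs Hp. assert (Hs0 : 0 <= s) by lra.
    destruct (Rle_lt_or_eq_dec c (z s) (Hp s ltac:(lra))) as [Hgt|Heq].
    + destruct (dn_cont _ _ _ (Hd s Hs0) (z s - c) ltac:(lra)) as [d [dp Hd']].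
      exists (d/2). split; [lra|]. intros r Hr.
      specialize (Hd' (r - s)). replace (s + (r - s)) with r in Hd' by ring.
      assert (Rabs (z r - z s) < z s - c) by (apply Hd'; [rewrite Rabs_right; lra| lra]).
      apply Rabs_def2 in H. lra.
    + pose proof (Hl s Hs0 (eq_sym Heq)) as lp.
      destruct (Hd s Hs0 (l s) lp) as [d [dp Hd']].
      exists (d/2). split; [lra|]. intros r Hr.
      destruct (Req_dec r s) as [->|Hne]; [lra|].
      specialize (Hd' (r - s) ltac:(lra) ltac:(rewrite Rabs_right; lra) ltac:(lra)).
      replace (s + (r - s)) with r in Hd' by ring.
      apply Rabs_def2 in Hd'. destruct Hd' as [_ H2].
      assert (0 < (z r - z s) / (r - s)) by lra.
      assert (0 < z r - z s).
      { replace (z r - z s) with ((z r - z s) / (r - s) * (r - s)) by (field; lra).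
        apply Rmult_lt_0_compat; lra. }
      lra.
  - intros s Hs Hp. apply Rnot_lt_le. intro Hlt.
    destruct (dn_cont _ _ _ (Hd s ltac:(lra)) (c - z s) ltac:(lra)) as [d [dp Hd']].
    set (r := Rmax t1 (s - d/2)).
    assert (t1 <= r < s) by (unfold r, Rmax; destruct Rle_dec; lra).
    assert (Rabs (r - s) < d) by (rewrite Rabs_left; unfold r, Rmax in *; destruct Rle_dec; lra).
    specialize (Hd' (r - s) H0 ltac:(lra)). replace (s + (r - s)) with r in Hd' by ring.
    specialize (Hp r ltac:(lra)). apply Rabs_def2 in Hd'. lra.
Qed.

Lemma bounded_dn f t : 0 <= t ->
  (forall s, 0 <= s <= t -> exists l, deriv_nonneg f s l) ->
  exists R, forall s, 0 <= s <= t -> Rabs (f s) <= R.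
Proof.
  intros Ht Hd.
  assert (H : forall r, 0 <= r <= t -> exists R, forall s, 0 <= s <= r -> Rabs (f s) <= R).
  { apply cont_ind; [lra| |..].
    - exists (Rabs (f 0)). intros s Hs. replace s with 0 by lra. lra.
    - intros s Hs Hp. destruct (Hp s ltac:(lra)) as [R HR].
      destruct (Hd s ltac:(lra)) as [l Hl].
      destruct (dn_cont _ _ _ Hl 1 ltac:(lra)) as [d [dp Hd']].
      exists (d/2). split; [lra|]. exists (Rmax R (Rabs (f s) + 1)). intros s' Hs'.
      destruct (Rle_or_lt s' s). { pose proof (Rmax_l R (Rabs (f s) + 1)). pose proof (HR s' ltac:(lra)); lra. }
      specialize (Hd' (s' - s) ltac:(rewrite Rabs_right; lra) ltac:(lra)).
      replace (s + (s' - s)) with s' in Hd' by ring.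
      pose proof (Rmax_r R (Rabs (f s) + 1)). pose proof (Rabs_triang_inv (f s') (f s)). lra.
    - intros s Hs Hp.
      destruct (Hd s ltac:(lra)) as [l Hl].
      destruct (dn_cont _ _ _ Hl 1 ltac:(lra)) as [d [dp Hd']].
      set (r := Rmax 0 (s - d/2)).
      assert (0 <= r < s) by (unfold r, Rmax; destruct Rle_dec; lra).
      destruct (Hp r ltac:(lra)) as [R HR].
      exists (Rmax R (Rabs (f s) + 1)). intros s' Hs'.
      destruct (Rle_or_lt s' r). { pose proof (Rmax_l R (Rabs (f s) + 1)). pose proof (HR s' ltac:(lra)); lra. }
      assert (Rabs (s' - s) < d).
      { unfold Rabs; destruct Rcase_abs; unfold r, Rmax in *; destruct Rle_dec; lra. }
      specialize (Hd' (s' - s) H1 ltac:(lra)).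
      replace (s + (s' - s)) with s' in Hd' by ring.
      pose proof (Rmax_r R (Rabs (f s) + 1)). pose proof (Rabs_triang_inv (f s') (f s)). lra. }
  apply (H t). lra.
Qed.


Lemma bounded2 f : continuous2 f -> forall a1 b1 a2 b2, exists M,
  forall x y, a1 <= x <= b1 -> a2 <= y <= b2 -> Rabs (f x y) <= M.
Proof.
  intros Hc a1 b1 a2 b2.
  destruct (Rle_or_lt a2 b2) as [H2|H2]; [|exists 0; intros; lra].
  destruct (Rle_or_lt a1 b1) as [H1|H1]; [|exists 0; intros; lra].
  assert (inner : forall x, exists rho M, 0 < rho /\ forall x' y', Rabs (x' - x) < rho ->
            a2 <= y' <= b2 -> Rabs (f x' y') <= M).
  { intro x.
    assert (K : forall r, a2 <= r <= b2 -> exists rho M, 0 < rho /\ forall x' y', Rabs (x' - x) < rho ->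
            a2 <= y' <= r -> Rabs (f x' y') <= M).
    { apply cont_ind; [lra|..].
      - destruct (Hc x a2 1 ltac:(lra)) as [d [dp Hd]].
        exists d, (Rabs (f x a2) + 1). split; [lra|]. intros x' y' Hx Hy.
        assert (Rabs (y' - a2) < d) by (replace (y' - a2) with 0 by lra; rewrite Rabs_R0; lra).
        specialize (Hd x' y' Hx H). pose proof (Rabs_triang_inv (f x' y') (f x a2)). lra.
      - intros s Hs Hp. destruct (Hp s ltac:(lra)) as [rho [M [rp HM]]].
        destruct (Hc x s 1 ltac:(lra)) as [d [dp Hd]].
        exists (d/2). split; [lra|]. intros r Hr.
        exists (Rmin rho d), (Rmax M (Rabs (f x s) + 1)). split; [apply Rmin_pos; lra|].
        intros x' y' Hx Hy.
        pose proof (Rmin_l rho d). pose proof (Rmin_r rho d).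
        pose proof (Rmax_l M (Rabs (f x s) + 1)). pose proof (Rmax_r M (Rabs (f x s) + 1)).
        destruct (Rle_or_lt y' s). { pose proof (HM x' y' ltac:(lra) ltac:(lra)). lra. }
        assert (Hys : Rabs (y' - s) < d) by (rewrite Rabs_right; lra).
        specialize (Hd x' y' ltac:(lra) Hys). pose proof (Rabs_triang_inv (f x' y') (f x s)). lra.
      - intros s Hs Hp.
        destruct (Hc x s 1 ltac:(lra)) as [d [dp Hd]].
        set (r := Rmax a2 (s - d/2)).
        assert (a2 <= r < s) by (unfold r, Rmax; destruct Rle_dec; lra).
        destruct (Hp r ltac:(lra)) as [rho [M [rp HM]]].
        exists (Rmin rho d), (Rmax M (Rabs (f x s) + 1)). split; [apply Rmin_pos; lra|].
        intros x' y' Hx Hy.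
        pose proof (Rmin_l rho d). pose proof (Rmin_r rho d).
        pose proof (Rmax_l M (Rabs (f x s) + 1)). pose proof (Rmax_r M (Rabs (f x s) + 1)).
        destruct (Rle_or_lt y' r). { pose proof (HM x' y' ltac:(lra) ltac:(lra)). lra. }
        assert (Hys : Rabs (y' - s) < d).
        { unfold Rabs; destruct Rcase_abs; unfold r, Rmax in *; destruct Rle_dec; lra. }
        specialize (Hd x' y' ltac:(lra) Hys). pose proof (Rabs_triang_inv (f x' y') (f x s)). lra. }
    apply K; lra. }
  assert (K : forall r, a1 <= r <= b1 -> exists M, forall x y, a1 <= x <= r ->
            a2 <= y <= b2 -> Rabs (f x y) <= M).
  { apply cont_ind; [lra|..].
    - destruct (inner a1) as [rho [M [rp HM]]]. exists M. intros x y Hx Hy.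
      apply HM; [|lra]. replace (x - a1) with 0 by lra. rewrite Rabs_R0; lra.
    - intros s Hs Hp. destruct (Hp s ltac:(lra)) as [M0 HM0].
      destruct (inner s) as [rho [M [rp HM]]].
      exists (rho/2). split; [lra|]. intros r Hr. exists (Rmax M0 M). intros x y Hx Hy.
      pose proof (Rmax_l M0 M). pose proof (Rmax_r M0 M).
      destruct (Rle_or_lt x s). { pose proof (HM0 x y ltac:(lra) Hy). lra. }
      pose proof (HM x y ltac:(rewrite Rabs_right; lra) Hy). lra.
    - intros s Hs Hp.
      destruct (inner s) as [rho [M [rp HM]]].
      set (r := Rmax a1 (s - rho/2)).
      assert (a1 <= r < s) by (unfold r, Rmax; destruct Rle_dec; lra).
      destruct (Hp r ltac:(lra)) as [M0 HM0].
      exists (Rmax M0 M). intros x y Hx Hy.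
      pose proof (Rmax_l M0 M). pose proof (Rmax_r M0 M).
      destruct (Rle_or_lt x r). { pose proof (HM0 x y ltac:(lra) Hy). lra. }
      assert (Hxs : Rabs (x - s) < rho).
      { unfold Rabs; destruct Rcase_abs; unfold r, Rmax in *; destruct Rle_dec; lra. }
      pose proof (HM x y Hxs Hy). lra. }
  apply K; lra.
Qed.


Lemma lip2 v : smooth2 v -> forall X1 X2 Y1 Y2, exists L, 0 < L /\
  forall x1 y1 x2 y2, X1 <= x1 <= X2 -> Y1 <= y1 <= Y2 -> X1 <= x2 <= X2 -> Y1 <= y2 <= Y2 ->
  Rabs (v x1 y1 - v x2 y2) <= L * (Rabs (x1 - x2) + Rabs (y1 - y2)).
Proof.
  intros [D [D0 [Hd Hc]]] X1 X2 Y1 Y2.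
  destruct (bounded2 _ (Hc (true :: nil)) X1 X2 Y1 Y2) as [Mx HMx].
  destruct (bounded2 _ (Hc (false :: nil)) X1 X2 Y1 Y2) as [My HMy].
  exists (Rabs Mx + Rabs My + 1). split; [pose proof (Rabs_pos Mx); pose proof (Rabs_pos My); lra|].
  intros x1 y1 x2 y2 Hx1 Hy1 Hx2 Hy2. subst v.
  destruct (MVT_abs (fun s => D nil s y1) (fun s => D (true :: nil) s y1) x2 x1) as [c [Hc1 Hc2]].
  { intros c _. apply Hd. }
  destruct (MVT_abs (fun s => D nil x2 s) (fun s => D (false :: nil) x2 s) y2 y1) as [e [He1 He2]].
  { intros e _. apply Hd. }
  simpl in Hc1, He1.
  assert (cb : X1 <= c <= X2) by (unfold Rmin, Rmax in Hc2; destruct Rle_dec; lra).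
  assert (eb : Y1 <= e <= Y2) by (unfold Rmin, Rmax in He2; destruct Rle_dec; lra).
  pose proof (HMx c y1 cb Hy1). pose proof (HMy x2 e Hx2 eb).
  replace (D nil x1 y1 - D nil x2 y2) with ((D nil x1 y1 - D nil x2 y1) + (D nil x2 y1 - D nil x2 y2)) by ring.
  eapply Rle_trans; [apply Rabs_triang|]. rewrite Hc1, He1.
  pose proof (Rabs_pos (x1 - x2)). pose proof (Rabs_pos (y1 - y2)).
  pose proof (Rle_abs Mx). pose proof (Rle_abs My). pose proof (Rabs_pos Mx). pose proof (Rabs_pos My).
  assert (Rabs (D (true :: nil) c y1) * Rabs (x1 - x2) <= (Rabs Mx + Rabs My + 1) * Rabs (x1 - x2)).
  { apply Rmult_le_compat_r; lra. }
  assert (Rabs (D (false :: nil) x2 e) * Rabs (y1 - y2) <= (Rabs Mx + Rabs My + 1) * Rabs (y1 - y2)).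
  { apply Rmult_le_compat_r; lra. }
  lra.
Qed.


Lemma dpl_mul f g x a b : derivable_pt_lim f x a -> derivable_pt_lim g x b ->
  derivable_pt_lim (fun t => f t * g t) x (a * g x + f x * b).
Proof. intros; exact (derivable_pt_lim_mult f g x a b H H0). Qed.
Lemma dpl_plus f g x a b : derivable_pt_lim f x a -> derivable_pt_lim g x b ->
  derivable_pt_lim (fun t => f t + g t) x (a + b).
Proof. intros; exact (derivable_pt_lim_plus f g x a b H H0). Qed.
Lemma dpl_minus f g x a b : derivable_pt_lim f x a -> derivable_pt_lim g x b ->
  derivable_pt_lim (fun t => f t - g t) x (a - b).
Proof. intros; exact (derivable_pt_lim_minus f g x a b H H0). Qed.
Lemma dpl_expc c x : derivable_pt_lim (fun t => exp (c * t)) x (c * exp (c * x)).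
Proof.
  assert (H := derivable_pt_lim_comp (fun t => c * t) exp x c (exp (c * x))).
  replace (c * exp (c * x)) with (c * exp (c * x)) by ring.
  rewrite Rmult_comm. apply H.
  - pose proof (derivable_pt_lim_scal (fun t => t) c x 1 (derivable_pt_lim_id x)) as K.
    rewrite Rmult_1_r in K. exact K.
  - apply derivable_pt_lim_exp.
Qed.

Definition ext (f : R -> R) (l0 : R) (t : R) : R :=
  if Rle_dec 0 t then f t else f 0 + l0 * t.

Lemma ext_eq f l0 t : 0 <= t -> ext f l0 t = f t.
Proof. intro H; unfold ext; destruct Rle_dec; [reflexivity|lra]. Qed.

Lemma ext_dpl f f' : (forall s, 0 <= s -> deriv_nonneg f s (f' s)) ->
  forall s, 0 <= s -> derivable_pt_lim (ext f (f' 0)) s (f' s).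
Proof.
  intros Hd s Hs eps He.
  destruct (Hd s Hs eps He) as [d [dp Hd']].
  destruct (Rle_lt_or_eq_dec 0 s Hs) as [Hpos|H0].
  - exists (mkposreal (Rmin d s) (Rmin_pos _ _ dp Hpos)). intros h hn Hh. simpl in Hh.
    pose proof (Rmin_l d s). pose proof (Rmin_r d s).
    assert (0 <= s + h) by (apply Rabs_def2 in Hh; lra).
    rewrite !ext_eq by lra. apply Hd'; lra.
  - subst s. exists (mkposreal d dp). intros h hn Hh. simpl in Hh.
    destruct (Rle_or_lt 0 h).
    + rewrite !ext_eq by lra. apply Hd'; lra.
    + unfold ext. destruct (Rle_dec 0 (0 + h)); [lra|]. destruct (Rle_dec 0 0); [|lra].
      replace ((f 0 + f' 0 * (0 + h) - f 0) / h - f' 0) with 0 by (field; lra).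
      rewrite Rabs_R0; lra.
Qed.

Lemma dn_of_dpl F G t l : 0 <= t -> (forall s, 0 <= s -> F s = G s) ->
  derivable_pt_lim F t l -> deriv_nonneg G t l.
Proof.
  intros Ht Heq H eps He. destruct (H eps He) as [d Hd].
  exists d. split; [apply cond_pos|]. intros h hn Hh Hth.
  rewrite <- !Heq by lra. apply Hd; assumption.
Qed.


Lemma sqn (x : R) : 0 <= x * x.
Proof. pose proof (Rle_0_sqr x). unfold Rsqr in H. exact H. Qed.

Lemma cont_dep v w (uu x1 y1 : R -> R) t :
  smooth2 v -> smooth2 w -> 0 <= t ->
  (forall s, 0 <= s -> deriv_nonneg x1 s (v (x1 s) (y1 s)) /\
                       deriv_nonneg y1 s (w (x1 s) (y1 s) + uu s)) ->
  forall eps, 0 < eps -> exists eta, 0 < eta /\ forall x2 y2,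
   (forall s, 0 <= s -> deriv_nonneg x2 s (v (x2 s) (y2 s)) /\
                        deriv_nonneg y2 s (w (x2 s) (y2 s) + uu s)) ->
   x2 0 = x1 0 -> Rabs (y2 0 - y1 0) < eta -> Rabs (y2 t - y1 t) < eps.
Proof.
  intros sv sw Ht Hs1 eps He.
  destruct (bounded_dn x1 t Ht (fun s Hs => ex_intro _ _ (proj1 (Hs1 s (proj1 Hs))))) as [Rx HRx].
  destruct (bounded_dn y1 t Ht (fun s Hs => ex_intro _ _ (proj2 (Hs1 s (proj1 Hs))))) as [Ry HRy].
  set (R0 := Rabs Rx + Rabs Ry).
  assert (HR0x : forall s, 0 <= s <= t -> Rabs (x1 s) <= R0).
  { intros s Hs. pose proof (HRx s Hs). pose proof (Rle_abs Rx). pose proof (Rabs_pos Ry). unfold R0; lra. }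
  assert (HR0y : forall s, 0 <= s <= t -> Rabs (y1 s) <= R0).
  { intros s Hs. pose proof (HRy s Hs). pose proof (Rle_abs Ry). pose proof (Rabs_pos Rx). unfold R0; lra. }
  destruct (lip2 v sv (-R0-1) (R0+1) (-R0-1) (R0+1)) as [Lv [Lvp HLv]].
  destruct (lip2 w sw (-R0-1) (R0+1) (-R0-1) (R0+1)) as [Lw [Lwp HLw]].
  set (L := Lv + Lw).
  set (e1 := Rmin eps 1).
  assert (e1p : 0 < e1) by (apply Rmin_pos; lra).
  assert (e1le : e1 <= 1) by apply Rmin_r.
  assert (e1e : e1 <= eps) by apply Rmin_l.
  set (th := e1 * e1 * exp (- (4 * L) * t)).
  assert (thp : 0 < th) by (unfold th; pose proof (exp_pos (- (4 * L) * t)); apply Rmult_lt_0_compat; nra).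
  exists (Rmin 1 (th / 2)). split; [apply Rmin_pos; lra|].
  intros x2 y2 Hs2 Hx0 Hy0.
  set (fx1 := fun s => v (x1 s) (y1 s)).
  set (fx2 := fun s => v (x2 s) (y2 s)).
  set (fy1 := fun s => w (x1 s) (y1 s) + uu s).
  set (fy2 := fun s => w (x2 s) (y2 s) + uu s).
  set (e := fun s => (x2 s - x1 s) * (x2 s - x1 s) + (y2 s - y1 s) * (y2 s - y1 s)).
  set (g := fun s => e s * exp (- (4 * L) * s)).
  set (lg := fun s => ((2 * (x2 s - x1 s) * (fx2 s - fx1 s) + 2 * (y2 s - y1 s) * (fy2 s - fy1 s))
                      - 4 * L * e s) * exp (- (4 * L) * s)).
  assert (gder : forall s, 0 <= s -> deriv_nonneg g s (lg s)).
  { intros s Hs.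
    pose proof (ext_dpl x1 fx1 (fun s Hs => proj1 (Hs1 s Hs)) s Hs) as d1.
    pose proof (ext_dpl x2 fx2 (fun s Hs => proj1 (Hs2 s Hs)) s Hs) as d2.
    pose proof (ext_dpl y1 fy1 (fun s Hs => proj2 (Hs1 s Hs)) s Hs) as d3.
    pose proof (ext_dpl y2 fy2 (fun s Hs => proj2 (Hs2 s Hs)) s Hs) as d4.
    pose proof (dpl_mul _ _ s _ _
      (dpl_plus _ _ s _ _ (dpl_mul _ _ s _ _ (dpl_minus _ _ s _ _ d2 d1) (dpl_minus _ _ s _ _ d2 d1))
                         (dpl_mul _ _ s _ _ (dpl_minus _ _ s _ _ d4 d3) (dpl_minus _ _ s _ _ d4 d3)))
      (dpl_expc (- (4 * L)) s)) as K.
    cbv beta in K. rewrite !(ext_eq _ _ s Hs) in K.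
    eapply dn_of_dpl; [exact Hs| |].
    2:{ replace (lg s) with
         (((fx2 s - fx1 s) * (x2 s - x1 s) + (x2 s - x1 s) * (fx2 s - fx1 s) +
           ((fy2 s - fy1 s) * (y2 s - y1 s) + (y2 s - y1 s) * (fy2 s - fy1 s))) *
          exp (- (4 * L) * s) +
          ((x2 s - x1 s) * (x2 s - x1 s) + (y2 s - y1 s) * (y2 s - y1 s)) *
          (- (4 * L) * exp (- (4 * L) * s))) by (unfold lg, e; ring).
        exact K. }
    intros r Hr. cbv beta. rewrite !(ext_eq _ _ r Hr). reflexivity. }
  assert (claim : forall s, 0 <= s <= t -> g s < th -> lg s <= 0).
  { intros s Hs Hg.
    assert (Ex : exp (- (4 * L) * t) <= exp (- (4 * L) * s)).
    { destruct (Req_dec s t) as [->|]; [lra|]. left. apply exp_increasing. unfold L; nra. }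
    pose proof (exp_pos (- (4 * L) * t)). pose proof (exp_pos (- (4 * L) * s)).
    assert (es : e s < 1).
    { unfold g, th in Hg. cbv beta in Hg.
      assert (e s * exp (- (4 * L) * t) < e1 * e1 * exp (- (4 * L) * t)).
      { assert (0 <= e s) by (unfold e; cbv beta; pose proof (Rle_0_sqr (x2 s - x1 s)); pose proof (Rle_0_sqr (y2 s - y1 s)); unfold Rsqr in *; lra).
        pose proof (Rmult_le_compat_l (e s) _ _ H1 Ex). lra. }
      assert (e s < e1 * e1) by (apply (Rmult_lt_reg_r (exp (- (4 * L) * t))); lra).
      nra. }
    set (dx := x2 s - x1 s) in *. set (dy := y2 s - y1 s) in *.
    assert (Hdx : Rabs dx < 1) by (apply Rabs_def1; unfold e in es; fold dx dy in es; nra).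
    assert (Hdy : Rabs dy < 1) by (apply Rabs_def1; unfold e in es; fold dx dy in es; nra).
    pose proof (HR0x s Hs) as a1. pose proof (HR0y s Hs) as a2.
    apply Rabs_def2 in Hdx. apply Rabs_def2 in Hdy.
    pose proof (Rle_abs (x1 s)) as b1. pose proof (Rle_abs (- x1 s)) as b2. rewrite Rabs_Ropp in b2.
    pose proof (Rle_abs (y1 s)) as b3. pose proof (Rle_abs (- y1 s)) as b4. rewrite Rabs_Ropp in b4.
    assert (HV : Rabs (fx2 s - fx1 s) <= Lv * (Rabs dx + Rabs dy)).
    { apply HLv; unfold dx, dy in *; lra. }
    assert (HW : Rabs (fy2 s - fy1 s) <= Lw * (Rabs dx + Rabs dy)).
    { unfold fy1, fy2. replace (w (x2 s) (y2 s) + uu s - (w (x1 s) (y1 s) + uu s))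
        with (w (x2 s) (y2 s) - w (x1 s) (y1 s)) by ring.
      apply HLw; unfold dx, dy in *; lra. }
    assert (T1 : dx * (fx2 s - fx1 s) <= Rabs dx * (L * (Rabs dx + Rabs dy))).
    { eapply Rle_trans. apply Rle_abs. rewrite Rabs_mult. apply Rmult_le_compat_l. apply Rabs_pos.
      pose proof (Rabs_pos dx); pose proof (Rabs_pos dy). unfold L; nra. }
    assert (T2 : dy * (fy2 s - fy1 s) <= Rabs dy * (L * (Rabs dx + Rabs dy))).
    { eapply Rle_trans. apply Rle_abs. rewrite Rabs_mult. apply Rmult_le_compat_l. apply Rabs_pos.
      pose proof (Rabs_pos dx); pose proof (Rabs_pos dy). unfold L; nra. }
    assert (Sq : (Rabs dx + Rabs dy) * (Rabs dx + Rabs dy) <= 2 * e s).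
    { assert (A1 : Rabs dx * Rabs dx = dx*dx) by (rewrite <- Rabs_mult; apply Rabs_right; nra).
      assert (A2 : Rabs dy * Rabs dy = dy*dy) by (rewrite <- Rabs_mult; apply Rabs_right; nra).
      assert (A3 : 0 <= (Rabs dx - Rabs dy) * (Rabs dx - Rabs dy)) by (pose proof (Rle_0_sqr (Rabs dx - Rabs dy)) as QQ; unfold Rsqr in QQ; exact QQ).
      unfold e; cbv beta; fold dx dy. nra. }
    unfold lg. fold dx dy.
    assert (Lp : 0 < L) by (unfold L; lra).
    assert (2 * dx * (fx2 s - fx1 s) + 2 * dy * (fy2 s - fy1 s) - 4 * L * e s <= 0) by nra.
    nra. }
  set (e0 := e 0).
  assert (e0lt : e0 < th / 2).
  { unfold e0, e. rewrite Hx0, Rminus_diag, Rmult_0_l, Rplus_0_l.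
    pose proof (Rmin_l 1 (th/2)). pose proof (Rmin_r 1 (th/2)).
    assert (Rabs (y2 0 - y1 0) * Rabs (y2 0 - y1 0) < th / 2).
    { pose proof (Rabs_pos (y2 0 - y1 0)). nra. }
    rewrite <- Rabs_mult in H1. rewrite Rabs_right in H1 by (apply Rle_ge, sqn). exact H1. }
  set (ep := th / (2 * (t + 1))).
  assert (epp : 0 < ep) by (unfold ep; apply Rdiv_lt_0_compat; lra).
  assert (ept : ep * t < th / 2).
  { unfold ep. apply (Rmult_lt_reg_r (2 * (t + 1))); [lra|].
    unfold Rdiv. field_simplify; [|lra]. nra. }
  assert (MAIN : forall r, 0 <= r <= t -> g r <= e0 + ep * r).
  { apply cont_ind; [lra|..].
    - unfold g, e0. rewrite Rmult_0_r, exp_0. lra.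
    - intros s Hs Hp. pose proof (Hp s ltac:(lra)) as Ps.
      assert (lgs : lg s <= 0) by (apply claim; [lra|]; nra).
      destruct (gder s ltac:(lra) ep epp) as [d [dp Hd]].
      exists (d/2). split; [lra|]. intros r Hr.
      destruct (Req_dec r s) as [->|Hne]; [lra|].
      specialize (Hd (r - s) ltac:(lra) ltac:(rewrite Rabs_right; lra) ltac:(lra)).
      replace (s + (r - s)) with r in Hd by ring.
      apply Rabs_def2 in Hd. destruct Hd as [Hd _].
      assert ((g r - g s) / (r - s) < ep) by lra.
      assert (g r - g s < ep * (r - s)).
      { apply (Rmult_lt_compat_r (r - s)) in H; [|lra].
        unfold Rdiv in H. rewrite Rmult_assoc, Rinv_l in H; lra. }
      lra.
    - intros s Hs Hp. apply Rnot_lt_le. intro Hlt.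
      destruct (dn_cont _ _ _ (gder s ltac:(lra)) ((g s - (e0 + ep * s))/2) ltac:(lra)) as [d [dp Hd']].
      set (r := Rmax 0 (s - d/2)).
      assert (0 <= r < s) by (unfold r, Rmax; destruct Rle_dec; lra).
      assert (Rabs (r - s) < d) by (rewrite Rabs_left; unfold r, Rmax in *; destruct Rle_dec; lra).
      specialize (Hd' (r - s) H0 ltac:(lra)). replace (s + (r - s)) with r in Hd' by ring.
      specialize (Hp r ltac:(lra)). apply Rabs_def2 in Hd'. nra. }
  pose proof (MAIN t ltac:(lra)) as Pt.
  assert (gt : g t < th) by lra.
  unfold g, th in gt.
  pose proof (exp_pos (- (4 * L) * t)).
  assert (e t < e1 * e1) by (apply (Rmult_lt_reg_r (exp (- (4 * L) * t))); lra).
  unfold e in H0. cbv beta in H0.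
  pose proof (sqn (x2 t - x1 t)).
  assert (Q : (y2 t - y1 t) * (y2 t - y1 t) < e1 * e1) by lra.
  clear -Q e1p e1e.
  apply Rabs_def1; nra.
Qed.

From Coquelicot Require Import Coquelicot.
Open Scope R_scope.

Lemma prim (u : R -> R) : smooth1 u ->
  (exists T, 0 < T /\ (forall t, u (t + T) = u t) /\
     exists pr : Riemann_integrable u 0 T, / T * RiemannInt pr = 0) ->
  exists U : R -> R, U 0 = 0 /\ (forall s, derivable_pt_lim U s (u s)) /\
    exists C, 0 <= C /\ forall s, 0 <= s -> Rabs (U s) <= C.
Proof.
  intros [D [D0 HD]] [T [Tp [Hper [pr Hpr]]]].
  assert (cu : forall s, continuous u s).
  { intro s. apply continuity_pt_filterlim. subst u.
    apply derivable_continuous_pt. exists (D 1%nat s). apply HD. }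
  set (U := fun s => RInt u 0 s).
  assert (dU : forall s, derivable_pt_lim U s (u s)).
  { intro s. apply is_derive_Reals. apply (is_derive_RInt u U 0 s); [|apply cu].
    apply filter_forall. intro b. unfold U. apply (RInt_correct (V := R_CompleteNormedModule)). apply ex_RInt_continuous. intros; apply cu. }
  assert (U0 : U 0 = 0) by (unfold U; rewrite RInt_point; reflexivity).
  exists U. split; [exact U0|]. split; [exact dU|].
  assert (UT : U T = 0).
  { unfold U. rewrite (RInt_Reals u 0 T pr).
    apply (Rmult_eq_reg_l (/ T)); [rewrite Rmult_0_r; exact Hpr|].
    apply Rinv_neq_0_compat; lra. }
  assert (per : forall s, U (s + T) = U s).
  { intro s.
    destruct (MVT_abs (fun s => U (s + T) - U s) (fun s => u (s + T) * 1 - u s) 0 s) as [c [Hc _]].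
    { intros c _. apply dpl_minus; [|apply dU].
      apply (derivable_pt_lim_comp (fun s => s + T) U c 1 (u (c + T))); [|apply dU].
      pose proof (derivable_pt_lim_plus (fun s => s) (fun _ => T) c 1 0 (derivable_pt_lim_id c)
        (derivable_pt_lim_const T c)) as K. rewrite Rplus_0_r in K. exact K. }
    rewrite Rmult_1_r, Hper, Rminus_diag, Rabs_R0, Rmult_0_l in Hc.
    rewrite Rplus_0_l, UT, U0, Rminus_0_r in Hc.
    apply Rabs_eq_0 in Hc. lra. }
  destruct (bounded_dn U T ltac:(lra)) as [R HR].
  { intros s Hs. exists (u s). apply (dn_of_dpl U U s (u s)); [lra|reflexivity|apply dU]. }
  exists (Rabs R). split; [apply Rabs_pos|].
  assert (ind : forall n : nat, forall s, 0 <= s <= INR n * T -> Rabs (U s) <= Rabs R).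
  { induction n as [|n IH]; intros s Hs.
    - simpl in Hs. replace s with 0 by lra. rewrite U0, Rabs_R0. apply Rabs_pos.
    - rewrite S_INR in Hs. destruct (Rle_or_lt s T).
      + pose proof (HR s ltac:(lra)). pose proof (Rle_abs R). lra.
      + replace s with ((s - T) + T) by ring. rewrite per. apply IH. nra. }
  intros s Hs.
  destruct (archimed_cor1 (T / (s + 1)) ltac:(apply Rdiv_lt_0_compat; lra)) as [N [HN HN0]].
  apply (ind N). split; [lra|].
  assert (0 < INR N) by (apply lt_0_INR; exact HN0).
  apply (Rmult_lt_compat_r (INR N * (s + 1))) in HN; [|nra].
  field_simplify in HN; lra.
Qed.


Lemma abs_le x y : Rabs x <= y -> - y <= x <= y.
Proof. intro H. pose proof (Rle_abs x). pose proof (Rle_abs (- x)). rewrite Rabs_Ropp in H1. lra. Qed.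

Lemma dn_minus f g t a b : deriv_nonneg f t a -> derivable_pt_lim g t b ->
  deriv_nonneg (fun s => f s - g s) t (a - b).
Proof.
  intros Hf Hg eps He.
  destruct (Hf (eps/2) ltac:(lra)) as [d1 [d1p H1]].
  destruct (Hg (eps/2) ltac:(lra)) as [d2 H2].
  exists (Rmin d1 d2). split; [apply Rmin_pos; [lra|apply cond_pos]|].
  intros h hn Hh Ht.
  pose proof (Rmin_l d1 d2). pose proof (Rmin_r d1 d2).
  specialize (H1 h hn ltac:(lra) Ht). specialize (H2 h hn ltac:(lra)).
  replace ((f (t + h) - g (t + h) - (f t - g t)) / h - (a - b))
    with (((f (t + h) - f t) / h - a) - ((g (t + h) - g t) / h - b)) by (field; exact hn).
  eapply Rle_lt_trans; [apply Rabs_triang|]. rewrite Rabs_Ropp. lra.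
Qed.

Lemma dn_opp f t a : deriv_nonneg f t a -> deriv_nonneg (fun s => - f s) t (- a).
Proof.
  intros Hf eps He. destruct (Hf eps He) as [d [dp H]]. exists d. split; [exact dp|].
  intros h hn Hh Ht. specialize (H h hn Hh Ht).
  replace ((- f (t + h) - - f t) / h - - a) with (- ((f (t + h) - f t) / h - a)) by (field; exact hn).
  rewrite Rabs_Ropp. exact H.
Qed.

Lemma near_sign w M delta a e : smooth2 w ->
  (forall x y, near_pm1 delta y ->
       (forall l, derivable_pt_lim (fun s => w x s) y l -> Rabs l <= M)) ->
  (forall x, w x 1 > a /\ w x (-1) < - a) ->
  0 < e < delta -> Rabs M * e < a ->
  forall x y, (1 - e < y <= 1 -> 0 < w x y) /\ (-1 <= y < -1 + e -> w x y < 0).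
Proof.
  intros [D [D0 [Hd _]]] HM Ha He HMe x y. subst w.
  pose proof (Rle_abs M).
  split; intro Hy.
  - destruct (MVT_abs (fun s => D nil x s) (fun s => D (false :: nil) x s) y 1) as [c [Hc Hc2]].
    { intros c _. apply Hd. }
    assert (cb : y <= c <= 1) by (unfold Rmin, Rmax in Hc2; destruct Rle_dec; lra).
    assert (Hl : Rabs (D (false :: nil) x c) <= M).
    { apply (HM x c); [left; lra| apply Hd]. }
    pose proof (Ha x) as [Ha1 _].
    rewrite (Rabs_right (1 - y)) in Hc by lra.
    assert (Rabs (D nil x 1 - D nil x y) <= Rabs M * e).
    { rewrite Hc. apply Rmult_le_compat; try lra; apply Rabs_pos. }
    apply abs_le in H0. lra.
  - destruct (MVT_abs (fun s => D nil x s) (fun s => D (false :: nil) x s) (-1) y) as [c [Hc Hc2]].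
    { intros c _. apply Hd. }
    assert (cb : -1 <= c <= y) by (unfold Rmin, Rmax in Hc2; destruct Rle_dec; lra).
    assert (Hl : Rabs (D (false :: nil) x c) <= M).
    { apply (HM x c); [right; lra| apply Hd]. }
    pose proof (Ha x) as [_ Ha1].
    rewrite (Rabs_right (y - -1)) in Hc by lra.
    assert (Rabs (D nil x y - D nil x (-1)) <= Rabs M * e).
    { rewrite Hc. apply Rmult_le_compat; try lra; apply Rabs_pos. }
    apply abs_le in H0. lra.
Qed.


Lemma div_nn x y : 0 <= x -> 0 < y -> 0 <= x / y.
Proof. intros. unfold Rdiv. apply Rmult_le_pos; [lra|]. left; apply Rinv_0_lt_compat; lra. Qed.

Theorem theorem2p3 (v w : R -> R -> R) (u : R -> R) :
  smooth2 v -> smooth2 w -> smooth1 u ->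
  (* (1) boundedness near y = 1 and y = -1 *)
  (exists delta M, 0 < delta /\
     forall x y, near_pm1 delta y ->
       Rabs (v x y) <= M /\ Rabs (w x y) <= M /\
       (forall l, derivable_pt_lim (fun s => v s y) x l -> Rabs l <= M) /\
       (forall l, derivable_pt_lim (fun s => v x s) y l -> Rabs l <= M) /\
       (forall l, derivable_pt_lim (fun s => w s y) x l -> Rabs l <= M) /\
       (forall l, derivable_pt_lim (fun s => w x s) y l -> Rabs l <= M)) ->
  (* (2) *)
  (exists a, 0 < a /\ forall x, w x 1 > a /\ w x (-1) < - a) ->
  (* (3) u is T-periodic with zero mean *)
  (exists T, 0 < T /\ (forall t, u (t + T) = u t) /\
     exists pr : Riemann_integrable u 0 T, / T * RiemannInt pr = 0) ->
  (* global continuability of solutions starting in |y| <= 1 *)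
  (forall lam x0 y0, Rabs y0 <= 1 ->
     exists x y, x 0 = x0 /\ y 0 = y0 /\ is_solution v w u lam x y) ->
  exists lam0, 0 < lam0 /\
    forall lam, lam >= lam0 ->
      exists x y, is_solution v w u lam x y /\
        forall t, 0 <= t -> Rabs (y t) < 1.
Proof.
  intros sv sw su [delta [M [dp HM]]] [a [ap Ha]] HT Hglob.
  destruct (prim u su HT) as [U [U0 [dU [C [C0 HC]]]]].
  set (K := C + 1).
  set (M1 := Rabs M + 1).
  assert (Kp : 0 < K) by (unfold K; lra).
  assert (M1p : 0 < M1) by (unfold M1; pose proof (Rabs_pos M); lra).
  set (lam0 := 2 * K + 3 * K / delta + 3 * M1 * K / a + 1).
  assert (tt1 : 0 <= 3 * K / delta) by (apply div_nn; unfold K; lra).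
  assert (tt2 : 0 <= 3 * M1 * K / a) by (apply div_nn; [|lra]; unfold K; apply Rmult_le_pos; lra).
  exists lam0. split; [unfold lam0; lra|].
  intros lam Hlam.
  assert (lp : 0 < lam) by (unfold lam0 in *; lra).
  assert (c1 : 2 * K < lam) by (unfold lam0 in *; lra).
  assert (c2 : 3 * K / lam < delta).
  { apply (Rmult_lt_reg_r lam); [lra|]. unfold Rdiv. rewrite Rmult_assoc, Rinv_l by lra.
    assert (3 * K / delta < lam) by (unfold lam0 in *; lra).
    apply (Rmult_lt_compat_r delta) in H; [|lra]. unfold Rdiv in H.
    rewrite Rmult_assoc, Rinv_l in H; lra. }
  assert (c3 : Rabs M * (3 * K / lam) < a).
  { assert (3 * M1 * K / a < lam) by (unfold lam0 in *; lra).
    apply (Rmult_lt_compat_r a) in H; [|lra]. unfold Rdiv in H.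
    rewrite (Rmult_assoc (3 * M1 * K)), Rinv_l in H by lra.
    apply (Rmult_lt_reg_r lam); [lra|]. unfold Rdiv.
    replace (Rabs M * (3 * K * / lam) * lam) with (Rabs M * 3 * K) by (field; lra).
    unfold M1 in H. unfold K in *. nra. }
  assert (c0 : 0 < 3 * K / lam) by (apply Rdiv_lt_0_compat; lra).
  pose proof (near_sign w M delta a (3 * K / lam) sw
     (fun x y Hy => proj2 (proj2 (proj2 (proj2 (proj2 (HM x y Hy)))))) Ha ltac:(lra) c3) as NS.
  set (b := 1 - 2 * K / lam).
  assert (bK : 2 * K / lam < 1) by (apply (Rmult_lt_reg_r lam); [lra|]; unfold Rdiv;
    rewrite Rmult_assoc, Rinv_l by lra; lra).
  assert (b2 : 0 < 2 * K / lam) by (apply Rdiv_lt_0_compat; lra).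
  assert (bp : 0 < b < 1) by (unfold b; lra).
  assert (HUl : forall t, 0 <= t -> Rabs (/ lam * U (lam * t)) < K / lam).
  { intros t Ht. rewrite Rabs_mult, Rabs_inv, (Rabs_right lam) by lra.
    pose proof (HC (lam * t) ltac:(nra)).
    unfold Rdiv. rewrite Rmult_comm. apply Rmult_lt_compat_r; [apply Rinv_0_lt_compat; lra|].
    unfold K; lra. }
  assert (Hsol : forall p, exists xy : (R -> R) * (R -> R), Rabs p <= 1 ->
     fst xy 0 = 0 /\ snd xy 0 = p /\ is_solution v w u lam (fst xy) (snd xy)).
  { intro p. destruct (Rle_dec (Rabs p) 1) as [Hp|Hp].
    - destruct (Hglob lam 0 p Hp) as [x [y [H1 [H2 H3]]]]. exists (x, y). intros _. simpl; auto.
    - exists ((fun _ => 0), (fun _ => 0)). intro; contradiction. }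
  set (X := fun p => fst (proj1_sig (constructive_indefinite_description _ (Hsol p)))).
  set (Y := fun p => snd (proj1_sig (constructive_indefinite_description _ (Hsol p)))).
  assert (HXY : forall p, Rabs p <= 1 -> X p 0 = 0 /\ Y p 0 = p /\ is_solution v w u lam (X p) (Y p)).
  { intros p Hp. unfold X, Y. destruct (constructive_indefinite_description _ (Hsol p)) as [xy Hxy].
    simpl. apply Hxy, Hp. }
  set (z := fun p t => Y p t - / lam * U (lam * t)).
  assert (dk : forall t, derivable_pt_lim (fun t => / lam * U (lam * t)) t (u (lam * t))).
  { intro t.
    assert (K1 : derivable_pt_lim (fun t => U (lam * t)) t (u (lam * t) * lam)).
    { apply (derivable_pt_lim_comp (fun t => lam * t) U t lam (u (lam * t))); [|apply dU].
      pose proof (derivable_pt_lim_scal (fun t => t) lam t 1 (derivable_pt_lim_id t)) as K2.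
      rewrite Rmult_1_r in K2. exact K2. }
    pose proof (derivable_pt_lim_scal _ (/ lam) t _ K1) as K2.
    replace (u (lam * t)) with (/ lam * (u (lam * t) * lam)) by (field; lra). exact K2. }
  assert (dz : forall p, Rabs p <= 1 -> forall t, 0 <= t ->
            deriv_nonneg (z p) t (w (X p t) (Y p t))).
  { intros p Hp t Ht. destruct (HXY p Hp) as [_ [_ Hs]].
    pose proof (dn_minus _ _ t _ _ (proj2 (Hs t Ht)) (dk t)) as K1.
    replace (w (X p t) (Y p t)) with (w (X p t) (Y p t) + u (lam * t) - u (lam * t)) by ring.
    exact K1. }
  assert (top : forall p t, 0 <= t -> z p t = b -> 0 < w (X p t) (Y p t)).
  { intros p t Ht Hz. apply (NS (X p t) (Y p t)). pose proof (HUl t Ht) as Q. apply Rabs_def2 in Q.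
    unfold z, b in Hz. assert (Y p t = 1 - 2 * K / lam + / lam * U (lam * t)) by lra.
    unfold Rdiv in *. lra. }
  assert (bot : forall p t, 0 <= t -> z p t = - b -> w (X p t) (Y p t) < 0).
  { intros p t Ht Hz. apply (NS (X p t) (Y p t)). pose proof (HUl t Ht) as Q. apply Rabs_def2 in Q.
    unfold z, b in Hz. assert (Y p t = - (1 - 2 * K / lam) + / lam * U (lam * t)) by lra.
    unfold Rdiv in *. lra. }
  set (A := fun p => exists t, 0 <= t /\ b < z p t).
  set (B := fun p => exists t, 0 <= t /\ z p t < - b).
  assert (persA : forall p, Rabs p <= 1 -> forall t1, 0 <= t1 -> b <= z p t1 -> forall t, t1 <= t -> b <= z p t).
  { intros p Hp. apply (persist (z p) (fun s => w (X p s) (Y p s)) b (dz p Hp)).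
    intros s Hs Hz. apply top; assumption. }
  assert (persB : forall p, Rabs p <= 1 -> forall t1, 0 <= t1 -> z p t1 <= - b -> forall t, t1 <= t -> z p t <= - b).
  { intros p Hp t1 Ht1 Hz t Ht.
    assert (b <= - z p t); [|lra].
    apply (persist (fun s => - z p s) (fun s => - w (X p s) (Y p s)) b) with (t1 := t1); try assumption; try lra.
    - intros s Hs. apply dn_opp. apply dz; assumption.
    - intros s Hs Hz'. assert (z p s = - b) by lra. pose proof (bot p s Hs H). lra. }
  assert (disj : forall p, Rabs p <= 1 -> A p -> B p -> False).
  { intros p Hp [t1 [Ht1 H1]] [t2 [Ht2 H2]].
    pose proof (persA p Hp t1 Ht1 ltac:(lra) (Rmax t1 t2) (Rmax_l t1 t2)).
    pose proof (persB p Hp t2 Ht2 ltac:(lra) (Rmax t1 t2) (Rmax_r t1 t2)). lra. }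
  assert (z0 : forall p, Rabs p <= 1 -> z p 0 = p).
  { intros p Hp. unfold z. rewrite Rmult_0_r, U0, Rmult_0_r, Rminus_0_r. apply HXY, Hp. }
  assert (Ab : A b).
  { assert (Hb : Rabs b <= 1) by (rewrite Rabs_right; lra).
    pose proof (top b 0 (Rle_refl 0) (z0 b Hb)) as wp.
    destruct (dz b Hb 0 (Rle_refl 0) _ wp) as [d [ddp Hd]].
    exists (d/2). split; [lra|].
    specialize (Hd (d/2) ltac:(lra) ltac:(rewrite Rabs_right; lra) ltac:(lra)).
    rewrite Rplus_0_l, z0 in Hd by exact Hb. apply Rabs_def2 in Hd. destruct Hd as [_ Hd].
    assert (0 < (z b (d/2) - b) / (d/2)) by lra.
    assert (0 < z b (d/2) - b).
    { replace (z b (d/2) - b) with ((z b (d/2) - b) / (d/2) * (d/2)) by (field; lra).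
      apply Rmult_lt_0_compat; lra. }
    lra. }
  assert (Bb : B (- b)).
  { assert (Hb : Rabs (- b) <= 1) by (rewrite Rabs_Ropp, Rabs_right; lra).
    pose proof (bot (- b) 0 (Rle_refl 0) (z0 (- b) Hb)) as wp.
    destruct (dz (- b) Hb 0 (Rle_refl 0) (- w (X (- b) 0) (Y (- b) 0)) ltac:(lra)) as [d [ddp Hd]].
    exists (d/2). split; [lra|].
    specialize (Hd (d/2) ltac:(lra) ltac:(rewrite Rabs_right; lra) ltac:(lra)).
    rewrite Rplus_0_l, z0 in Hd by exact Hb. apply Rabs_def2 in Hd. destruct Hd as [Hd _].
    assert ((z (- b) (d/2) - - b) / (d/2) < 0) by lra.
    assert (z (- b) (d/2) - - b < 0).
    { replace (z (- b) (d/2) - - b) with ((z (- b) (d/2) - - b) / (d/2) * (d/2)) by (field; lra).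
      apply Ropp_lt_cancel. rewrite Ropp_0, Ropp_mult_distr_l. apply Rmult_lt_0_compat; lra. }
    lra. }
  assert (openA : forall p, Rabs p <= 1 -> A p -> exists eta, 0 < eta /\
            forall q, Rabs q <= 1 -> Rabs (q - p) < eta -> A q).
  { intros p Hp [t [Ht Hz]]. destruct (HXY p Hp) as [Xp0 [Yp0 Hsp]].
    destruct (cont_dep v w (fun s => u (lam * s)) (X p) (Y p) t sv sw Ht Hsp (z p t - b) ltac:(lra))
      as [eta [etap Heta]].
    exists eta. split; [exact etap|]. intros q Hq Hqp. destruct (HXY q Hq) as [Xq0 [Yq0 Hsq]].
    specialize (Heta (X q) (Y q) Hsq ltac:(congruence) ltac:(rewrite Yq0, Yp0; exact Hqp)).
    exists t. split; [exact Ht|]. apply Rabs_def2 in Heta. unfold z in *. lra. }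
  assert (openB : forall p, Rabs p <= 1 -> B p -> exists eta, 0 < eta /\
            forall q, Rabs q <= 1 -> Rabs (q - p) < eta -> B q).
  { intros p Hp [t [Ht Hz]]. destruct (HXY p Hp) as [Xp0 [Yp0 Hsp]].
    destruct (cont_dep v w (fun s => u (lam * s)) (X p) (Y p) t sv sw Ht Hsp (- b - z p t) ltac:(lra))
      as [eta [etap Heta]].
    exists eta. split; [exact etap|]. intros q Hq Hqp. destruct (HXY q Hq) as [Xq0 [Yq0 Hsq]].
    specialize (Heta (X q) (Y q) Hsq ltac:(congruence) ltac:(rewrite Yq0, Yp0; exact Hqp)).
    exists t. split; [exact Ht|]. apply Rabs_def2 in Heta. unfold z in *. lra. }
  assert (inb : forall p, - b <= p <= b -> Rabs p <= 1).
  { intros p Hp. unfold Rabs; destruct Rcase_abs; lra. }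
  destruct (classic (exists p, - b <= p <= b /\ ~ A p /\ ~ B p)) as [[p [Hp [nA nB]]]|Hno].
  - destruct (HXY p (inb p Hp)) as [_ [_ Hs]].
    exists (X p), (Y p). split; [exact Hs|]. intros t Ht.
    assert (z p t <= b) by (apply Rnot_lt_le; intro; apply nA; exists t; auto).
    assert (- b <= z p t) by (apply Rnot_lt_le; intro; apply nB; exists t; auto).
    pose proof (HUl t Ht) as Q. apply Rabs_def2 in Q. unfold z, b in *.
    assert (K / lam = 2 * K / lam - K / lam) by (unfold Rdiv; ring).
    apply Rabs_def1; lra.
  - exfalso.
    assert (AB : forall p, - b <= p <= b -> A p \/ B p).
    { intros p Hp. destruct (classic (A p)); [left; auto|].
      destruct (classic (B p)); [right; auto|]. exfalso; apply Hno; exists p; auto. }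
    assert (allB : forall r, - b <= r <= b -> B r).
    { apply cont_ind; [lra|exact Bb|..].
      - intros s Hs Hp. destruct (openB s (inb s ltac:(lra)) (Hp s ltac:(lra))) as [eta [etap He]].
        exists (Rmin (eta / 2) (b - s)). split; [apply Rmin_pos; lra|]. intros r Hr.
        pose proof (Rmin_l (eta / 2) (b - s)). pose proof (Rmin_r (eta / 2) (b - s)).
        apply He; [apply inb; lra|]. rewrite Rabs_right; lra.
      - intros s Hs Hp. destruct (AB s ltac:(lra)) as [HA|HB]; [|exact HB].
        exfalso. destruct (openA s (inb s ltac:(lra)) HA) as [eta [etap He]].
        set (r := Rmax (- b) (s - eta / 2)).
        assert (- b <= r < s) by (unfold r, Rmax; destruct Rle_dec; lra).
        apply (disj r (inb r ltac:(lra))); [|apply Hp; lra].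
        apply He; [apply inb; lra|].
        rewrite Rabs_left; unfold r, Rmax in *; destruct Rle_dec; lra. }
    exact (disj b (inb b ltac:(lra)) Ab (allB b ltac:(lra))).
Qed.
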